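(* In every run of the algorithm described in the context in which at most $t$ processes crash, for all correct processes $p_i,p_j$: if $w\_sync_i[i]=x$ at some time, then there is a finite time after which $w\_sync_i[j]\ge x$.
   Context: Model. There are $n$ asynchronous processes $p_1,\dots,p_n$, of which up to $t<n/2$ may crash; a process runs its algorithm correctly until it crashes, and a process that never crashes is correct. Each ordered pair of processes is linked by a reliable (no loss, corruption, duplication or creation; every message sent to a correct process is eventually received), asynchronous, not necessarily FIFO channel. $p_w$ is the single writer, invoking writes sequentially; $v_0$ is the initial value. Messages: $\textsc{write}(b,v)$ with $b\in\{0,1\}$, which stands for the two types $\textsc{write0}(v)$ and $\textsc{write1}(v)$; $\textsc{read}()$; $\textsc{proceed}()$. Variables of $p_i$. These are: $history_i$ with $history_i[0]=v_0$; $w\_sync_i[1..n]$, initially all $0$; $r\_sync_i[1..n]$, initially all $0$. $\mathsf{write}(v)$ by $p_w$: $wsn\gets w\_sync_w[w]+1$; $w\_sync_w[w]\gets wsn$; $history_w[wsn]\gets v$. Send $\textsc{write}(wsn\bmod 2,v)$ to each $p_j$ with $w\_sync_w[j]=wsn-1$. Wait until at least $n-t$ indices $j$ have $w\_sync_w[j]=wsn$. Return. $\mathsf{read}()$ by $p_i$: $r\_sync_i[i]\gets r\_sync_i[i]+1$ and call the new value $rsn$. Send $\textsc{read}()$ to all $p_j$ with $j\ne i$. Wait until at least $n-t$ indices $j$ have $r\_sync_i[j]=rsn$. Let $sn\gets w\_sync_i[i]$. Wait until at least $n-t$ indices $j$ have $w\_sync_i[j]\ge sn$. Return $history_i[sn]$.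 On receipt of $\textsc{write}(b,v)$ from $p_j$ at $p_i$: Wait until $b=(w\_sync_i[j]+1)\bmod 2$. Let $wsn\gets w\_sync_i[j]+1$. If $wsn=w\_sync_i[i]+1$, then set $w\_sync_i[i]\gets wsn$ and $history_i[wsn]\gets v$, and send $\textsc{write}(wsn\bmod 2,v)$ to each $p_\ell$ with $w\_sync_i[\ell]=wsn-1$. Else, if $wsn<w\_sync_i[i]$, send $\textsc{write}((wsn+1)\bmod 2,history_i[wsn+1])$ to $p_j$. Finally set $w\_sync_i[j]\gets wsn$. On receipt of $\textsc{read}()$ from $p_j$ at $p_i$: Let $sn\gets w\_sync_i[i]$; wait until $w\_sync_i[j]\ge sn$; send $\textsc{proceed}()$ to $p_j$. On receipt of $\textsc{proceed}()$ from $p_j$ at $p_i$: $r\_sync_i[j]\gets r\_sync_i[j]+1$. Message handlers run concurrently; a waiting handler does not block the reception of other messages. *)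

(* Defs.v *)
From mathcomp Require Import all_boot.
From Stdlib Require List.
Set Implicit Arguments.
Unset Strict Implicit.
Unset Printing Implicit Defensive.

(* Messages: WRITE(b,v) (b = true stands for bit 1), READ(), PROCEED(). *)
Inductive Msg (V : Type) := MWrite of bool & V | MRead | MProceed.
Arguments MRead {V}.
Arguments MProceed {V}.

Inductive Client :=
| CIdle
| CWriting of nat      (* write with sequence number wsn, waiting for n-t acks *)
| CRead1 of nat        (* read with rsn, waiting for n-t proceed *)
| CRead2 of nat.       (* read that fixed sn, waiting for n-t w_sync >= sn *)

Section Model.
Variable n : nat.
Variable V : Type.

Record PState := MkP {
  hist    : nat -> V;
  wsync   : 'I_n -> nat;
  rsync   : 'I_n -> nat;
  crashed : bool;
  client  : Client;
  pendW   : seq ('I_n * bool * V);     (* waiting WRITE handlers (sender, b, v) *)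
  pendR   : seq ('I_n * nat);          (* waiting READ handlers (sender, sn) *)
  outbox  : seq ('I_n * Msg V)         (* messages decided but not yet sent *)
}.

(* Global state: processes and messages in transit (src, dst, msg). *)
Record GState := MkG {
  proc    : 'I_n -> PState;
  transit : seq ('I_n * 'I_n * Msg V)
}.

Definition fupd (A : Type) (f : 'I_n -> A) (i : 'I_n) (x : A) : 'I_n -> A :=
  fun k => if k == i then x else f k.

Definition hupd (h : nat -> V) (k : nat) (x : V) : nat -> V :=
  fun m => if m == k then x else h m.

Definition setP (g : GState) (i : 'I_n) (p : PState) : GState :=
  MkG (fupd (proc g) i p) (transit g).

Definition set_client (p : PState) (c : Client) : PState :=
  MkP (hist p) (wsync p) (rsync p) (crashed p) c (pendW p) (pendR p) (outbox p).

Definition set_outbox (p : PState) (o : seq ('I_n * Msg V)) : PState :=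
  MkP (hist p) (wsync p) (rsync p) (crashed p) (client p) (pendW p) (pendR p) o.

Definition set_pendW (p : PState) (l : seq ('I_n * bool * V)) : PState :=
  MkP (hist p) (wsync p) (rsync p) (crashed p) (client p) l (pendR p) (outbox p).

Definition set_pendR (p : PState) (l : seq ('I_n * nat)) : PState :=
  MkP (hist p) (wsync p) (rsync p) (crashed p) (client p) (pendW p) l (outbox p).

Definition do_crash (p : PState) : PState :=
  MkP (hist p) (wsync p) (rsync p) true (client p) (pendW p) (pendR p) (outbox p).

(* write(v) invoked by the writer i (first, atomic, part). *)
Definition do_invwrite (i : 'I_n) (v : V) (p : PState) : PState :=
  let wsn := (wsync p i).+1 in
  let ws := fupd (wsync p) i wsn in
  MkP (hupd (hist p) wsn v) ws (rsync p) (crashed p) (CWriting wsn)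
      (pendW p) (pendR p)
      (outbox p ++ [seq (j, MWrite (odd wsn) v) | j <- enum 'I_n & ws j == wsn.-1]).

(* read() invoked by p_i (first, atomic, part). *)
Definition do_invread (i : 'I_n) (p : PState) : PState :=
  let rsn := (rsync p i).+1 in
  MkP (hist p) (wsync p) (fupd (rsync p) i rsn) (crashed p) (CRead1 rsn)
      (pendW p) (pendR p)
      (outbox p ++ [seq (j, MRead) | j <- enum 'I_n & j != i]).

(* Reception at p_dst of message m from p_src: READ/WRITE start a handler
   (which possibly waits), PROCEED is processed immediately. *)
Definition deliver (dst src : 'I_n) (m : Msg V) (p : PState) : PState :=
  match m with
  | MWrite b v => set_pendW p (pendW p ++ [:: (src, b, v)])
  | MRead => set_pendR p (pendR p ++ [:: (src, wsync p dst)])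
  | MProceed =>
      MkP (hist p) (wsync p) (fupd (rsync p) src (rsync p src).+1) (crashed p)
          (client p) (pendW p) (pendR p) (outbox p)
  end.

(* Body (after the wait) of the WRITE(b,v) handler at p_i, message from p_j. *)
Definition exec_write (i j : 'I_n) (v : V) (p : PState) : PState :=
  let wsn := (wsync p j).+1 in
  if wsn == (wsync p i).+1 then
    let ws := fupd (wsync p) i wsn in
    MkP (hupd (hist p) wsn v) (fupd ws j wsn) (rsync p) (crashed p) (client p)
        (pendW p) (pendR p)
        (outbox p ++ [seq (l, MWrite (odd wsn) v) | l <- enum 'I_n & ws l == wsn.-1])
  else if wsn < wsync p i then
    MkP (hist p) (fupd (wsync p) j wsn) (rsync p) (crashed p) (client p)
        (pendW p) (pendR p)
        (outbox p ++ [:: (j, MWrite (odd wsn.+1) (hist p wsn.+1))])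
  else
    MkP (hist p) (fupd (wsync p) j wsn) (rsync p) (crashed p) (client p)
        (pendW p) (pendR p) (outbox p).

Inductive Act :=
| ACrash of 'I_n
| AInvWrite of V
| ACompWrite
| AInvRead of 'I_n
| AReadPh2 of 'I_n
| AReadRet of 'I_n
| ASend of 'I_n & 'I_n & Msg V        (* ASend i dst m *)
| ARecv of 'I_n & 'I_n & Msg V        (* ARecv src dst m *)
| AExecW of 'I_n & 'I_n & bool & V    (* AExecW i j b v : handler at i of WRITE(b,v) from j *)
| AExecR of 'I_n & 'I_n & nat         (* AExecR i j sn : handler at i of READ from j *)
| ASkip.

(* One step of the system; w is the writer, t the resilience bound. *)
Inductive step (t : nat) (w : 'I_n) (g : GState) : Act -> GState -> Prop :=
| st_crash i :
    ~~ crashed (proc g i) ->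
    step t w g (ACrash i) (setP g i (do_crash (proc g i)))
| st_invwrite v :
    ~~ crashed (proc g w) -> client (proc g w) = CIdle ->
    step t w g (AInvWrite v) (setP g w (do_invwrite w v (proc g w)))
| st_compwrite wsn :
    ~~ crashed (proc g w) -> client (proc g w) = CWriting wsn ->
    n - t <= #|[pred j | wsync (proc g w) j == wsn]| ->
    step t w g ACompWrite (setP g w (set_client (proc g w) CIdle))
| st_invread i :
    ~~ crashed (proc g i) -> client (proc g i) = CIdle ->
    step t w g (AInvRead i) (setP g i (do_invread i (proc g i)))
| st_readph2 i rsn :
    ~~ crashed (proc g i) -> client (proc g i) = CRead1 rsn ->
    n - t <= #|[pred j | rsync (proc g i) j == rsn]| ->
    step t w g (AReadPh2 i)
      (setP g i (set_client (proc g i) (CRead2 (wsync (proc g i) i))))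
| st_readret i sn :
    ~~ crashed (proc g i) -> client (proc g i) = CRead2 sn ->
    n - t <= #|[pred j | sn <= wsync (proc g i) j]| ->
    step t w g (AReadRet i) (setP g i (set_client (proc g i) CIdle))
| st_send i d m l1 l2 :
    ~~ crashed (proc g i) -> outbox (proc g i) = l1 ++ (d, m) :: l2 ->
    step t w g (ASend i d m)
      (MkG (fupd (proc g) i (set_outbox (proc g i) (l1 ++ l2)))
           (transit g ++ [:: (i, d, m)]))
| st_recv src dst m l1 l2 :
    ~~ crashed (proc g dst) -> transit g = l1 ++ (src, dst, m) :: l2 ->
    step t w g (ARecv src dst m)
      (MkG (fupd (proc g) dst (deliver dst src m (proc g dst))) (l1 ++ l2))
| st_execw i j b v l1 l2 :
    ~~ crashed (proc g i) -> pendW (proc g i) = l1 ++ (j, b, v) :: l2 ->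
    b = odd (wsync (proc g i) j).+1 ->
    step t w g (AExecW i j b v)
      (setP g i (exec_write i j v (set_pendW (proc g i) (l1 ++ l2))))
| st_execr i j sn l1 l2 :
    ~~ crashed (proc g i) -> pendR (proc g i) = l1 ++ (j, sn) :: l2 ->
    sn <= wsync (proc g i) j ->
    step t w g (AExecR i j sn)
      (setP g i (set_outbox (set_pendR (proc g i) (l1 ++ l2))
                            (outbox (proc g i) ++ [:: (j, MProceed)])))
| st_skip : step t w g ASkip g.

Definition init_state (v0 : V) : GState :=
  MkG (fun _ => MkP (fun _ => v0) (fun _ => 0) (fun _ => 0) false CIdle [::] [::] [::])
      [::].

Definition correct (s : nat -> GState) (i : 'I_n) : Prop :=
  forall k, crashed (proc (s k) i) = false.

Definition is_run (t : nat) (w : 'I_n) (v0 : V)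
    (s : nat -> GState) (a : nat -> Act) : Prop :=
  s 0 = init_state v0 /\ forall k, step t w (s k) (a k) (s k.+1).

Definition at_most_t_crash (t : nat) (s : nat -> GState) : Prop :=
  exists C : {set 'I_n}, #|C| <= t /\ forall i, i \notin C -> correct s i.

(* Fairness: reliable channels and weak fairness of correct processes. *)
Definition fair (t : nat) (w : 'I_n) (s : nat -> GState) (a : nat -> Act) : Prop :=
  (forall src dst m k, correct s dst -> List.In (src, dst, m) (transit (s k)) ->
     exists k', k <= k' /\ a k' = ARecv src dst m)
  /\ (forall i d m k, correct s i -> List.In (d, m) (outbox (proc (s k) i)) ->
     exists k', k <= k' /\ a k' = ASend i d m)
  /\ (forall i j b v k, correct s i ->
       (forall k', k <= k' -> List.In (j, b, v) (pendW (proc (s k') i)) /\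
                              b = odd (wsync (proc (s k') i) j).+1) ->
     exists k', k <= k' /\ a k' = AExecW i j b v)
  /\ (forall i j sn k, correct s i ->
       (forall k', k <= k' -> List.In (j, sn) (pendR (proc (s k') i)) /\
                              sn <= wsync (proc (s k') i) j) ->
     exists k', k <= k' /\ a k' = AExecR i j sn)
  /\ (forall wsn k, correct s w ->
       (forall k', k <= k' -> client (proc (s k') w) = CWriting wsn /\
                  n - t <= #|[pred j | wsync (proc (s k') w) j == wsn]|) ->
     exists k', k <= k' /\ a k' = ACompWrite)
  /\ (forall i rsn k, correct s i ->
       (forall k', k <= k' -> client (proc (s k') i) = CRead1 rsn /\
                  n - t <= #|[pred j | rsync (proc (s k') i) j == rsn]|) ->
     exists k', k <= k' /\ a k' = AReadPh2 i)
  /\ (forall i sn k, correct s i ->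
       (forall k', k <= k' -> client (proc (s k') i) = CRead2 sn /\
                  n - t <= #|[pred j | sn <= wsync (proc (s k') i) j]|) ->
     exists k', k <= k' /\ a k' = AReadRet i).

End Model.

(* Main.v *)
Require Import Defs.
From mathcomp Require Import all_boot zify.
From Stdlib Require Import Classical.
Set Implicit Arguments.
Unset Strict Implicit.
Unset Printing Implicit Defensive.

Definition isW (V : Type) (b : bool) (m : Msg V) : bool :=
  if m is MWrite b' _ then b' == b else false.
Definition outc n V (P : PState n V) (q : 'I_n) (b : bool) :=
  count (fun e : 'I_n * Msg V => (e.1 == q) && isW b e.2) (outbox P).
Definition trc n V (T : seq ('I_n * 'I_n * Msg V)) (p q : 'I_n) (b : bool) :=
  count (fun e : 'I_n * 'I_n * Msg V => (e.1.1 == p) && (e.1.2 == q) && isW b e.2) T.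
Definition pdc n V (P : PState n V) (p : 'I_n) (b : bool) :=
  count (fun e : 'I_n * bool * V => (e.1.1 == p) && (e.1.2 == b)) (pendW P).
Definition cntI (D S : nat) (b : bool) := count (fun k => odd k == b) (iota D.+1 (S - D)).
Definition Sv n V (P : PState n V) (p q : 'I_n) := minn (wsync P p) (wsync P q).+1.
Definition Ipair n V (Pp Pq : PState n V) (T : seq (_ * _ * Msg V)) (p q : 'I_n) :=
  wsync Pp q <= wsync Pp p /\ wsync Pq p <= Sv Pp p q /\
  forall b, outc Pp q b + trc T p q b + pdc Pq p b = cntI (wsync Pq p) (Sv Pp p q) b.
Definition Inv n V (g : GState n V) := forall p q, Ipair (proc g p) (proc g q) (transit g) p q.

Lemma count0 (T : Type) (a : pred T) s : (forall x, a x = false) -> count a s = 0.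
Proof. by move=> H; elim: s => //= x s ->; rewrite H. Qed.

Lemma cntI0 D b : cntI D D b = 0.
Proof. by rewrite /cntI subnn. Qed.

Lemma cntIS D S b : D <= S -> cntI D S.+1 b = cntI D S b + (odd S.+1 == b).
Proof.
move=> h; rewrite /cntI subSn // -[(S - D).+1]addn1 iotaD count_cat /= addn0.
idtac.
by rewrite subnKC.
Qed.

Lemma cntIL D S b : D < S -> cntI D S b = (odd D.+1 == b) + cntI D.+1 S b.
Proof.
move=> h; rewrite /cntI; have -> : S - D = (S - D.+1).+1 by lia.
by [].
Qed.

Lemma count_pos (T : Type) (a : pred T) s : 0 < count a s -> exists x, List.In x s /\ a x.
Proof.
elim: s => //= x s IH; case ax: (a x) => /=.
  by move=> _; exists x; split; [left|].
by move=> /IH [y [h1 h2]]; exists y; split; [right|].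
Qed.

Lemma count_enum_eq n (P : pred 'I_n) q :
  count (fun j => (j == q) && P j) (enum 'I_n) = P q.
Proof.
case Pq: (P q).
  rewrite (eq_count (a2 := pred1 q)); last by move=> j /=; case: eqP => // ->.
  rewrite count_uniq_mem ?enum_uniq // mem_enum //.
rewrite (eq_count (a2 := pred0)); last by move=> j /=; case: eqP => // ->.
by rewrite count_pred0.
Qed.

Lemma count_msgs n V (P0 : pred 'I_n) (bb : bool) (v : V) q b :
  count (fun e : 'I_n * Msg V => (e.1 == q) && isW b e.2)
     [seq (j, MWrite bb v) | j <- enum 'I_n & P0 j] = P0 q && (bb == b).
Proof.
rewrite count_map count_filter.
rewrite (eq_count (a2 := fun j => (j == q) && (P0 j && (bb == b)))).
  by rewrite count_enum_eq.
by move=> j /=; case: (j == q); case: (bb == b); case: (P0 j).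
Qed.

Lemma Ipair_ext n V (Pp Pq Pp' Pq' : PState n V) T p q :
  Ipair Pp Pq T p q -> wsync Pp' p = wsync Pp p -> wsync Pp' q = wsync Pp q ->
  wsync Pq' p = wsync Pq p ->
  (forall b, outc Pp' q b = outc Pp q b) -> (forall b, pdc Pq' p b = pdc Pq p b) ->
  Ipair Pp' Pq' T p q.
Proof.
rewrite /Ipair /Sv => -[h1 [h2 h3]] e1 e1' e2 e3 e4; rewrite e1 e1' e2; split=>//; split=>// b.
by rewrite e3 e4.
Qed.

Lemma Inv_local n V (g : GState n V) i P' : Inv g -> wsync P' = wsync (proc g i) ->
  pendW P' = pendW (proc g i) -> (forall q b, outc P' q b = outc (proc g i) q b) ->
  Inv (Defs.setP g i P').
Proof.
move=> H e1 e2 e3 p q; rewrite /Defs.setP /fupd /=.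
have e4 : forall p b, pdc P' p b = pdc (proc g i) p b by move=> ??; rewrite /pdc e2.
case: (p =P i) => [->|_]; case: (q =P i) => [->|_]; (eapply Ipair_ext; [exact: H| ..]) => //; by rewrite e1.
Qed.

Lemma outc_app_nw n V (P : PState n V) l q b : (forall x, List.In x l -> isW b x.2 = false) ->
  count (fun e : 'I_n * Msg V => (e.1 == q) && isW b e.2) (outbox P ++ l) = outc P q b.
Proof.
move=> H; rewrite count_cat /outc.
suff -> : count (fun e : 'I_n * Msg V => (e.1 == q) && isW b e.2) l = 0 by rewrite addn0.
elim: l H => //= x l IH H; rewrite H; last by left.
by rewrite andbF IH // => y hy; apply: H; right.
Qed.

Lemma Inv_init n V (v0 : V) : Inv (init_state n v0).
Proof.
move=> p q; rewrite /Ipair /Sv /=; split=>//; split=>// b.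
Qed.

Lemma Inv_invwrite n V (g : GState n V) w v : Inv g ->
  Inv (Defs.setP g w (do_invwrite w v (proc g w))).
Proof.
move=> H p q; rewrite /Defs.setP /=.
set P := proc g w; set a := wsync P w; set P' := do_invwrite w v P.
have ewP : forall l, wsync P' l = if l == w then a.+1 else wsync P l by [].
have ewo : forall q b, outc P' q b = outc P q b +
    ((fupd (wsync P) w a.+1 q == a) && (odd a.+1 == b)).
  by move=> q' b; rewrite /outc /= count_cat count_msgs.
have ewd : forall p b, pdc P' p b = pdc P p b by [].
have fw : fupd (proc g) w P' w = P' by rewrite /fupd eqxx.
have fo : forall k, k != w -> fupd (proc g) w P' k = proc g k by move=> k /negbTE; rewrite /fupd => ->.
case: (p =P w) => [->|/eqP pw]; case: (q =P w) => [->|/eqP qw].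
- rewrite fw. have [h1 [h2 h3]] := H w w. rewrite -/P in h1 h2 h3.
  rewrite /Ipair /Sv !ewP eqxx; split=>//; split; first by lia.
  move=> b; rewrite ewo ewd /fupd eqxx.
  have := h3 b; rewrite /Sv -/a. 
  have -> : minn a a.+1 = a by lia.
  have -> : minn a.+1 a.+2 = a.+1 by lia.
  rewrite !cntI0 eqn_leq ltnn /=; lia.
- rewrite fw (fo q qw). have [h1 [h2 h3]] := H w q. rewrite -/P in h1 h2 h3.
  move: h1 h2 h3; rewrite /Ipair /Sv !ewP eqxx (negbTE qw) -/a => h1 h2 h3.
  split; first by lia.
  have [ca|ca] := eqVneq (wsync P q) a.
  + rewrite ca in h2 h3 *.
    have e1 : minn a a.+1 = a by lia.
    have e2 : minn a.+1 a.+1 = a.+1 by lia.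
    rewrite e1 in h2 h3; rewrite e2; split; first by lia.
    move=> b; rewrite ewo /fupd (negbTE qw) ca eqxx /= cntIS // -h3; lia.
  + have e1 : minn a.+1 (wsync P q).+1 = minn a (wsync P q).+1.
      by move: ca h1; clear; lia.
    rewrite e1; split=>// b; rewrite ewo /fupd (negbTE qw) (negbTE ca) /= addn0; exact: h3.
- rewrite fw (fo p pw). eapply Ipair_ext; [exact: (H p w)| ..] => //.
  by rewrite ewP (negbTE pw).
- rewrite (fo p pw) (fo q qw); exact: H.
Qed.

Lemma Ipair_gen n V (Pp Pq Pp' Pq' : PState n V) T T' p q :
  Ipair Pp Pq T p q -> wsync Pp' p = wsync Pp p -> wsync Pp' q = wsync Pp q ->
  wsync Pq' p = wsync Pq p ->
  (forall b, outc Pp' q b + trc T' p q b + pdc Pq' p b = outc Pp q b + trc T p q b + pdc Pq p b) ->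
  Ipair Pp' Pq' T' p q.
Proof.
rewrite /Ipair /Sv => -[h1 [h2 h3]] e1 e1' e2 e3; rewrite e1 e1' e2; split=>//; split=>// b.
by rewrite e3 h3.
Qed.

Lemma Inv_send n V (g : GState n V) i d m l1 l2 : Inv g ->
  outbox (proc g i) = l1 ++ (d, m) :: l2 ->
  Inv (MkG (fupd (proc g) i (set_outbox (proc g i) (l1 ++ l2))) (transit g ++ [:: (i, d, m)])).
Proof.
move=> H eo p q /=.
set P' := set_outbox _ _.
have ws : forall k, wsync (fupd (proc g) i P' k) = wsync (proc g k).
  by move=> k; rewrite /fupd; case: ifP => // /eqP ->.
have pd : forall k p b, pdc (fupd (proc g) i P' k) p b = pdc (proc g k) p b.
  by move=> k p' b; rewrite /fupd; case: ifP => // /eqP ->.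
have oc : forall b, outc (fupd (proc g) i P' p) q b + ((i == p) && (d == q) && isW b m)
    = outc (proc g p) q b.
  move=> b; rewrite /fupd; case: (p =P i) => [->|/eqP/negbTE ne].
    by rewrite eqxx /outc /= eo !count_cat /=; lia.
  by rewrite eq_sym ne /= addn0.
apply: (Ipair_gen (H p q)); rewrite ?ws //.
move=> b; rewrite pd /trc count_cat /= addn0 -(oc b); lia.
Qed.

Lemma Inv_recv n V (g : GState n V) src dst m l1 l2 : Inv g ->
  transit g = l1 ++ (src, dst, m) :: l2 ->
  Inv (MkG (fupd (proc g) dst (deliver dst src m (proc g dst))) (l1 ++ l2)).
Proof.
move=> H et p q /=.
set P' := deliver _ _ _ _.
have ws : forall k, wsync (fupd (proc g) dst P' k) = wsync (proc g k).
  by move=> k; rewrite /fupd /P'; case: ifP => // /eqP ->; destruct m.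
have oc : forall k q b, outc (fupd (proc g) dst P' k) q b = outc (proc g k) q b.
  by move=> k q' b; rewrite /fupd /P'; case: ifP => // /eqP ->; destruct m.
have pd : forall b, pdc (fupd (proc g) dst P' q) p b =
    pdc (proc g q) p b + ((src == p) && (dst == q) && isW b m).
  move=> b; rewrite /fupd /P'; case: (q =P dst) => [->|/eqP/negbTE ne].
    rewrite eqxx; destruct m as [b' v'| |] => /=; rewrite ?andbT ?andbF ?addn0 //.
    by rewrite /pdc /= count_cat /= addn0.
  by rewrite [dst == q]eq_sym ne andbF addn0.
apply: (Ipair_gen (H p q)); rewrite ?ws //.
move=> b; rewrite oc pd /trc et !count_cat /=; lia.
Qed.

Lemma cntI_pos D S b : 0 < cntI D S b -> D < S.
Proof. rewrite /cntI; case: (ltnP D S) => // h; by rewrite (_ : S - D = 0) //; lia. Qed.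

Lemma Inv_execw n V (g : GState n V) r sd b0 v l1 l2 : Inv g ->
  pendW (proc g r) = l1 ++ (sd, b0, v) :: l2 -> b0 = odd (wsync (proc g r) sd).+1 ->
  Inv (Defs.setP g r (exec_write r sd v (set_pendW (proc g r) (l1 ++ l2)))).
Proof.
move=> H ep eb p q; rewrite /Defs.setP /=.
set P := proc g r; set P1 := set_pendW P _; set P' := exec_write r sd v P1.
set e := wsync P sd; set A := wsync P r.
have pdP : forall p b, pdc P p b = pdc P1 p b + ((sd == p) && (b0 == b)).
  by move=> p' b; rewrite /pdc ep !count_cat /=; lia.
have pdP' : forall p b, pdc P' p b = pdc P1 p b.
  by move=> x b; unfold P', exec_write; repeat case: ifP.
have [hAA [_ hAA3]] := H r r. rewrite -/P in hAA hAA3.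
have sdr : sd != r.
  apply/eqP => E; have := hAA3 b0; rewrite /Sv -/A.
  have -> : minn A A.+1 = A by lia.
  rewrite cntI0 pdP E eqxx eqxx /=; lia.
have [heA _] := H r sd; rewrite -/P -/e -/A in heA.
have ew : forall l, wsync P' l =
    if l == sd then e.+1 else if l == r then (if e == A then e.+1 else A) else wsync P l.
  move=> l; rewrite /P' /exec_write /= -/e -/A eqSS.
  have nrs := negbTE sdr; have nsr : (r == sd) = false by rewrite eq_sym.
  case: (eqVneq e A) => [eA|neA] /=; rewrite /fupd; first by [].
  case: ifP => _ /=; case: (l == sd) => //; case: eqP => // E; by subst l.
 
have eo : forall q b, outc P' q b = outc P q b +
    ((q != r) && (e == A) && (wsync P q == e) && (odd e.+1 == b)
     + (q == sd) && (e.+1 < A) && (odd e.+2 == b)).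
  move=> q' b; rewrite /P' /exec_write /= -/e -/A eqSS.
  case: (eqVneq e A) => [eA|neA] /=.
    rewrite /outc /= count_cat count_msgs.
    have -> : (e.+1 < A) = false by rewrite eA ltnNge leqnSn.
    rewrite andbF addn0 andbT; congr (_ + _).
    rewrite /fupd; case: (q' == r) => //=.
    by rewrite (_ : (e.+1 == e) = false) //; apply/eqP; lia.
  rewrite andbF /=; case: ifP => h /=.
    by rewrite /outc /= count_cat /= addn0 andbT eq_sym.
  by rewrite andbF addn0.
have fw : fupd (proc g) r P' r = P' by rewrite /fupd eqxx.
have fo : forall k, k != r -> fupd (proc g) r P' k = proc g k.
  by move=> k /negbTE; rewrite /fupd => ->.
have pd1 : forall p b, pdc P' p b + ((sd == p) && (b0 == b)) = pdc P p b.
  by move=> x b; rewrite pdP' pdP.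
have nsr : (r == sd) = false by rewrite eq_sym; exact: negbTE.
case: (p =P r) => [->|/eqP pr]; case: (q =P r) => [->|/eqP qr].
- rewrite fw /Ipair /Sv; split=>//; split; first by lia.
  move=> b; have := hAA3 b; rewrite /Sv -/A.
  have -> : minn A A.+1 = A by lia.
  have -> : minn (wsync P' r) (wsync P' r).+1 = wsync P' r by lia.
  rewrite !cntI0 eo eqxx nsr /= addn0 -(pd1 r b); lia.
- rewrite fw (fo q qr). have [h1 [h2 h3]] := H r q. rewrite -/P -/A in h1 h2 h3.
  rewrite /Ipair /Sv !ew nsr eqxx (negbTE qr).
  have [qs|qs] := eqVneq q sd.
  + rewrite qs in h1 h2 h3 qr *; rewrite /Sv -/A -/e in h2 h3.
    have [eA|neA] := eqVneq e A.
    * have E1 : minn A e.+1 = e by lia.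
      have E2 : minn e.+1 e.+2 = e.+1 by lia.
      rewrite E1 in h2 h3; rewrite E2; split; first by lia. split; first by lia.
      move=> b; rewrite eo -/e eqxx sdr eA eqxx /= -eA ltnNge leqnSn /= !andbF addn0.
      rewrite cntIS // -h3; lia.
    have eA' : e < A by lia.
    case: (ltnP e.+1 A) => hA.
    * have E1 : minn A e.+1 = e.+1 by lia.
      have E2 : minn A e.+2 = e.+2 by lia.
      rewrite E1 in h2 h3; rewrite E2; split; first by lia. split; first by lia.
      move=> b; rewrite eo -/e eqxx (negbTE neA) hA /= andbF /=.
      rewrite cntIS // -h3 eqxx /= !negbK; lia.
    * have E1 : minn A e.+1 = e.+1 by lia.
      have E2 : minn A e.+2 = e.+1 by lia.
      rewrite E1 in h2 h3; rewrite E2; split; first by lia. split; first by lia.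
      move=> b; rewrite eo -/e eqxx (negbTE neA) /= andbF /=.
      rewrite (_ : (e.+1 < A) = false) /=; last by apply/negbTE; rewrite -leqNgt.
      by rewrite andbF add0n addn0 -h3.
  + rewrite /Sv -/A in h2 h3.
    set c := wsync P q in h1 h2 h3 *.
    have [eA|neA] := eqVneq e A; last first.
      split; first by lia. split=>// b; rewrite eo qr (negbTE neA) (negbTE qs) /= addn0.
      move: (h3 b); lia.
    have [ce|ce] := eqVneq c e.
    * have E1 : minn A c.+1 = e by lia.
      have E2 : minn e.+1 c.+1 = e.+1 by lia.
      rewrite E1 in h2 h3; rewrite E2; split; first by lia. split; first by lia.
      move=> b; rewrite eo qr -/c ce -eA !eqxx (negbTE qs) /= addn0.
      rewrite cntIS // -h3; lia.
    * have E1 : minn e.+1 c.+1 = minn A c.+1 by move: ce h1; rewrite -eA; clear; lia.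
      rewrite E1; split; first by lia. split=>// b.
      have eAb : (e == A) = true by apply/eqP.
      rewrite eo qr eAb -/c (negbTE ce) (negbTE qs) /=; move: (h3 b); lia.
- rewrite fw (fo p pr). have [h1 [h2 h3]] := H p r. rewrite -/P in h2 h3.
  have [ps|ps] := eqVneq p sd.
  + rewrite ps in pr h1 h2 h3 *; rewrite -/e in h2 h3.
    have Hlt : e < Sv (proc g sd) sd r.
      apply: (cntI_pos (b := b0)); rewrite -h3 -(pd1 sd b0) eqxx eqxx /=; lia.
    rewrite /Ipair ew eqxx; split=>//; split=>// b.
    have := h3 b; rewrite (cntIL _ Hlt) -(pd1 sd b) eqxx /= eb -/e; lia.
  + apply: (Ipair_gen (H p r)) => //; first by rewrite ew (negbTE ps) (negbTE pr).
    have sp : (sd == p) = false by rewrite eq_sym; exact: negbTE.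
    by move=> b; rewrite -(pd1 p b) sp addn0.
- rewrite (fo p pr) (fo q qr); exact: H.
Qed.

Lemma Inv_step n V t w (g : GState n V) act g' : Inv g -> step t w g act g' -> Inv g'.
Proof.
move=> H; case.
- by move=> i _; apply: Inv_local.
- by move=> v _ _; apply: Inv_invwrite.
- by move=> wsn _ _ _; apply: Inv_local.
- move=> i _ _; apply: Inv_local => // q b.
  rewrite /outc /= count_cat count_map [X in _ + X]count0 ?addn0 // => x; by rewrite /= andbF.
- by move=> i rsn _ _ _; apply: Inv_local.
- by move=> i sn _ _ _; apply: Inv_local.
- by move=> i d m l1 l2 _ eo; apply: Inv_send.
- by move=> src dst m l1 l2 _ et; apply: Inv_recv.
- by move=> i j b v l1 l2 _ ep eb; exact: (Inv_execw H ep eb).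
- move=> i j sn l1 l2 _ _ _; apply: Inv_local => // q b.
  by rewrite /outc /= count_cat /= andbF !addn0.
- by [].
Qed.

Lemma Inv_all n V t w (v0 : V) (s : nat -> GState n V) a :
  is_run t w v0 s a -> forall k, Inv (s k).
Proof.
move=> [h0 hs]; elim=> [|k IH]; first by rewrite h0; apply: Inv_init.
exact: Inv_step IH (hs k).
Qed.

Lemma ew_mono n V i j (v : V) (P : PState n V) l : wsync P l <= wsync (exec_write i j v P) l.
Proof.
rewrite /exec_write; case: ifP => [/eqP h|_]; last case: ifP => _;
  rewrite /= /fupd; case: (l =P j) => [E|_]; try subst l; try case: (l =P i) => [E|_]; try subst l; lia.
Qed.

Lemma ew_j n V i j (v : V) (P : PState n V) : wsync (exec_write i j v P) j = (wsync P j).+1.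
Proof.
by rewrite /exec_write; case: ifP => _; last case: ifP => _; rewrite /= /fupd eqxx.
Qed.

Lemma ew_pendW n V i j (v : V) (P : PState n V) : pendW (exec_write i j v P) = pendW P.
Proof. by rewrite /exec_write; case: ifP => _; last case: ifP => _. Qed.

Lemma mono_fupd n V (f : 'I_n -> PState n V) i P' :
  (forall l, wsync (f i) l <= wsync P' l) -> forall q p, wsync (f q) p <= wsync (fupd f i P' q) p.
Proof. by move=> h q p; rewrite /fupd; case: (q =P i) => [->|]. Qed.

Lemma step_mono n V t w (g : GState n V) act g' : step t w g act g' ->
  forall q p, wsync (proc g q) p <= wsync (proc g' q) p.
Proof.
case; rewrite /Defs.setP /=; intros; try (apply: mono_fupd => //= l);
  try (by rewrite /fupd; case: eqP => [->|]); try (by destruct m); try exact: ew_mono.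
all: done.
Qed.

Ltac pendtac q i hin := case: (q =P i) => [E|] _ //; subst q; exact: hin.

Lemma step_pend n V t w (g : GState n V) act g' q x : step t w g act g' ->
  List.In x (pendW (proc g q)) -> wsync (proc g' q) x.1.1 = wsync (proc g q) x.1.1 ->
  List.In x (pendW (proc g' q)).
Proof.
move=> st hin; move: st; case; rewrite /Defs.setP /= /fupd.
- move=> i _; pendtac q i hin.
- move=> v _ _; pendtac q w hin.
- move=> wsn _ _ _; pendtac q w hin.
- move=> i _ _; pendtac q i hin.
- move=> i rsn _ _ _; pendtac q i hin.
- move=> i sn _ _ _; pendtac q i hin.
- move=> i d m l1 l2 _ _; pendtac q i hin.
- move=> src dst m l1 l2 _ _; case: (q =P dst) => [E|] //; subst q.
  by rewrite /deliver; destruct m => //= _; rewrite List.in_app_iff; left.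
- move=> i j b v l1 l2 _ e _; case: (q =P i) => [E|] //; subst q.
  rewrite ew_pendW /=; case: (x.1.1 =P j) => [Ej|nj].
    by rewrite Ej ew_j /=; lia.
  move=> _; move: hin; rewrite e !List.in_app_iff /= => -[|[E|]]; auto.
  by subst x.
- move=> i j sn l1 l2 _ _ _; pendtac q i hin.
- by [].
Qed.

Lemma step_execw_inc n V t w (g : GState n V) act g' i j b v : step t w g act g' ->
  act = AExecW i j b v -> wsync (proc g' i) j = (wsync (proc g i) j).+1.
Proof.
case => //; intros; try discriminate.
lazymatch goal with H : AExecW _ _ _ _ = _ |- _ => case: H => -> -> _ _ end.
by rewrite /Defs.setP /= /fupd eqxx ew_j.
Qed.

Lemma step_send_tr n V t w (g : GState n V) act g' i d m : step t w g act g' ->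
  act = ASend i d m -> List.In (i, d, m) (transit g').
Proof.
case => //; intros; try discriminate.
lazymatch goal with H : ASend _ _ _ = _ |- _ => case: H => -> -> -> end.
rewrite /= List.in_app_iff; right; left; done.
Qed.

Lemma step_recv_pd n V t w (g : GState n V) act g' src dst b v : step t w g act g' ->
  act = ARecv src dst (MWrite b v) -> List.In (src, b, v) (pendW (proc g' dst)).
Proof.
case => //; intros; try discriminate.
lazymatch goal with H : ARecv _ _ _ = _ |- _ => case: H => -> -> -> end.
rewrite /= /fupd eqxx /= List.in_app_iff; right; left; done.
Qed.

Lemma mono_le n V t w (v0 : V) (s : nat -> GState n V) a : is_run t w v0 s a ->
  forall q p K K', K <= K' -> wsync (proc (s K) q) p <= wsync (proc (s K') q) p.
Proof.
move=> [_ hs] q p K K' /subnKC <-; elim: (K' - K) => [|m IH]; first by rewrite addn0.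
rewrite addnS; apply: leq_trans IH _; exact: step_mono (hs _) _ _.
Qed.

Lemma LL n t w V (v0 : V) (s : nat -> GState n V) a p q :
  is_run t w v0 s a -> fair t w s a -> correct s p -> correct s q ->
  forall K, wsync (proc (s K) q) p < Sv (proc (s K) p) p q ->
  exists K', K <= K' /\ wsync (proc (s K) q) p < wsync (proc (s K') q) p.
Proof.
move=> hr hf cp cq K hlt.
have [h0 hs] := hr. have [f1 [f2 [f3 _]]] := hf.
set d := wsync (proc (s K) q) p.
have pendcase : forall K1 v, K <= K1 -> List.In (p, odd d.+1, v) (pendW (proc (s K1) q)) ->
    exists K', K <= K' /\ d < wsync (proc (s K') q) p.
  move=> K1 v hK1 hin.
  apply: NNPP => nG.
  have hle : forall K', K <= K' -> wsync (proc (s K') q) p = d.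
    move=> K' hK'; apply/eqP; rewrite eqn_leq (mono_le hr q p hK') andbT leqNgt.
    apply/negP => hgt; apply: nG; by exists K'.
  have hper : forall m, List.In (p, odd d.+1, v) (pendW (proc (s (K1 + m)) q)).
    elim=> [|m IH]; first by rewrite addn0.
    rewrite addnS; apply: (step_pend (hs _) IH) => /=; rewrite !hle //; lia.
  have := f3 q p (odd d.+1) v K1 cq; case.
    move=> k' hk'; split; first by rewrite -(subnKC hk'); exact: hper.
    by rewrite hle //; lia.
  move=> K'' [hK'' ha].
  have := step_execw_inc (hs K'') ha; rewrite !hle //; lia.
have [_ [_ h3]] := Inv_all hr K p q.
have := h3 (odd d.+1); rewrite (cntIL _ hlt) eqxx -/d => hsum.
have : 0 < outc (proc (s K) p) q (odd d.+1) \/ 0 < trc (transit (s K)) p q (odd d.+1)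
    \/ 0 < pdc (proc (s K) q) p (odd d.+1) by lia.
case=> [ho|[ht|hp]].
- have [[q' m] [hin /andP [/eqP e0 hw]]] := count_pos ho.
  destruct m as [b' v'| |] => //; move: hw => /= /eqP eb; simpl in e0; subst q' b'.
  have [K1 [hK1 ha]] := f2 p q (MWrite (odd d.+1) v') K cp hin.
  have hin2 := step_send_tr (hs K1) ha.
  have [K2 [hK2 ha2]] := f1 p q (MWrite (odd d.+1) v') K1.+1 cq hin2.
  apply: (pendcase K2.+1 v'); first by lia.
  exact: step_recv_pd (hs K2) ha2.
- have [[[p' q'] m] [hin /andP [/andP [/eqP e1 /eqP e2] hw]]] := count_pos ht.
  destruct m as [b' v'| |] => //; move: hw => /= /eqP eb; simpl in e1, e2; subst p' q' b'.
  have [K2 [hK2 ha2]] := f1 p q (MWrite (odd d.+1) v') K cq hin.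
  apply: (pendcase K2.+1 v'); first by lia.
  exact: step_recv_pd (hs K2) ha2.
- have [[[p' b'] v'] [hin /andP [/eqP e1 /eqP e2]]] := count_pos hp.
  simpl in e1, e2; subst p' b'.
  exact: (pendcase K v').
Qed.

Unset Implicit Arguments.

Theorem lemma6 (n t : nat) (Hnt : t.*2 < n) (w : 'I_n) (V : Type) (v0 : V)
    (s : nat -> GState n V) (a : nat -> Act n V) :
  is_run t w v0 s a ->
  fair t w s a ->
  at_most_t_crash t s ->
  forall i j : 'I_n, correct s i -> correct s j ->
  forall (x k : nat), wsync (proc (s k) i) i = x ->
  exists k0, forall k', k0 <= k' -> x <= wsync (proc (s k') i) j.
Proof.
move=> hr hf _ i j ci cj x k hx.
have mono := mono_le hr.
have HI := Inv_all hr.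
have STEP : forall K, wsync (proc (s K) i) j < wsync (proc (s K) i) i ->
    exists K', K <= K' /\ wsync (proc (s K) i) j < wsync (proc (s K') i) j.
  move=> K hK; set d := wsync (proc (s K) i) j.
  have inner : forall m, m <= d.+1 -> exists K1, K <= K1 /\
      (d < wsync (proc (s K1) i) j \/ m <= wsync (proc (s K1) j) i).
    elim=> [|m IH] hm; first by exists K; split=>//; right.
    have [K1 [hK1 [hl|hr1]]] := IH (ltnW hm); first by exists K1; split=>//; left.
    case: (ltnP m (wsync (proc (s K1) j) i)) => hm1; first by exists K1; split=>//; right.
    case: (ltnP d (wsync (proc (s K1) i) j)) => hd; first by exists K1; split=>//; left.
    have hd' : wsync (proc (s K1) i) j = d by have := mono i j _ _ hK1; rewrite -/d; lia.
    have ha : wsync (proc (s K) i) i <= wsync (proc (s K1) i) i by exact: mono.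
    have hS : wsync (proc (s K1) j) i < Sv (proc (s K1) i) i j.
      rewrite /Sv hd'; move: hK ha hm hm1 hr1; rewrite -/d; lia.
    have [K2 [hK2 hgt]] := LL hr hf ci cj hS.
    exists K2; split; first by lia. right; lia.
  have [K1 [hK1 [hl|hr1]]] := inner d.+1 (leqnn _); first by exists K1.
  case: (ltnP d (wsync (proc (s K1) i) j)) => hd; first by exists K1.
  have hd' : wsync (proc (s K1) i) j = d by have := mono i j _ _ hK1; rewrite -/d; lia.
  have [hc _] := HI K1 j i.
  have hS : wsync (proc (s K1) i) j < Sv (proc (s K1) j) j i.
    rewrite /Sv hd'; move: hc hr1; lia.
  have [K2 [hK2 hgt]] := LL hr hf cj ci hS.
  exists K2; split; first by lia. by rewrite -/d -hd'.
have reach : forall m, m <= x -> exists K, k <= K /\ m <= wsync (proc (s K) i) j.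
  elim=> [|m IH] hm; first by exists k.
  have [K [hK hmK]] := IH (ltnW hm).
  case: (ltnP m (wsync (proc (s K) i) j)) => h; first by exists K.
  have ha : wsync (proc (s k) i) i <= wsync (proc (s K) i) i by exact: mono.
  have [K' [hK' hgt]] := STEP K ltac:(lia).
  exists K'; split; first by lia. lia.
have [K [_ hK]] := reach x (leqnn _).
by exists K => k' hk'; apply: leq_trans hK (mono _ _ _ _ hk').
Qed.
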